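(* Let $G=(V,E)$ be a finite, simple, undirected, connected graph, let $S\subseteq V$ be nonempty and let $\ell\geq 1$ be an integer. Then $S$ is an $\ell$-solid-resolving set of $G$ if and only if for every vertex $x\in V$ and every nonempty set $Y\subseteq V$ with $x\notin Y$ and $|Y|\leq \ell$ there exists $s\in S$ such that $d(s,x)<d(s,Y)$.
   Context: $d(u,v)$ denotes the shortest-path distance in $G$, and for a nonempty $X\subseteq V$, $d(s,X)=\min_{x\in X} d(s,x)$. For $S=\{s_1,\dots,s_k\}\subseteq V$ and nonempty $X\subseteq V$, the distance array is $\mathcal{D}_S(X)=(d(s_1,X),\dots,d(s_k,X))$. A set $S\subseteq V$ is an $\ell$-solid-resolving set of $G$ if for all distinct nonempty sets $X,Y\subseteq V$ with $|X|\leq \ell$ (and $Y$ of arbitrary size) we have $\mathcal{D}_S(X)\neq \mathcal{D}_S(Y)$. *)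

(* Defs.v *)
From mathcomp Require Import all_boot.
Set Implicit Arguments. Unset Strict Implicit. Unset Printing Implicit Defensive.

Definition simple_graph (T : finType) (e : rel T) : Prop :=
  symmetric e /\ irreflexive e.

Definition connected_graph (T : finType) (e : rel T) : Prop :=
  forall x y : T, connect e x y.

Definition walk_n (T : finType) (e : rel T) (x y : T) (n : nat) : bool :=
  [exists p : n.-tuple T, path e x p && (last x p == y)].

(* shortest-path distance d(x,y): least n such that there is a walk of length n
   from x to y (searched among 0..#|T|-1, which suffices in a connected graph;
   returns #|T| if y is unreachable). *)
Definition dist (T : finType) (e : rel T) (x y : T) : nat :=
  find (walk_n e x y) (iota 0 #|T|).

(* d(s,X) = min_{x in X} d(s,x), for nonempty X (the neutral value #|T| exceeds
   every distance in a connected graph, so it never matters for nonempty X). *)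
Definition dist_set (T : finType) (e : rel T) (s : T) (X : {set T}) : nat :=
  \big[minn/#|T|]_(x in X) dist e s x.

Definition dist_array (T : finType) (e : rel T) (S X : {set T}) : seq nat :=
  [seq dist_set e s X | s <- enum S].

Definition solid_resolving (T : finType) (e : rel T) (l : nat) (S : {set T}) : Prop :=
  forall X Y : {set T}, X != set0 -> Y != set0 -> X != Y -> #|X| <= l ->
    dist_array e S X != dist_array e S Y.

(* Main.v *)
Require Import Defs.
From HB Require Import structures.
From mathcomp Require Import all_boot.

HB.instance Definition _ := SemiGroup.isComLaw.Build nat minn minnA minnC.

Lemma ds_le (T : finType) (e : rel T) s (Y : {set T}) y :
  y \in Y -> dist_set e s Y <= dist e s y.
Proof.
move=> yY; rewrite /dist_set (bigD1 (op:=minn) y) //=; exact: geq_minl.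
Qed.

Lemma ds_U1 (T : finType) (e : rel T) s (Y : {set T}) x :
  x \notin Y -> dist_set e s (x |: Y) = minn (dist e s x) (dist_set e s Y).
Proof.
move=> xY; rewrite /dist_set (bigD1 (op:=minn) x) ?setU11 //=; congr minn.
apply: eq_bigl => i; rewrite in_setU1.
by case: (eqVneq i x) => [->|_]; rewrite ?(negbTE xY) ?eqxx ?andbT ?andbF.
Qed.

Lemma arr_ne (T : finType) (e : rel T) (S X Y : {set T}) s :
  s \in S -> dist_set e s X != dist_set e s Y -> dist_array e S X != dist_array e S Y.
Proof.
move=> sS hne; apply/eqP => /eq_in_map h.
by move: hne; rewrite h ?eqxx // mem_enum.
Qed.

Theorem mainTheorem1 (T : finType) (e : rel T) (S : {set T}) (l : nat) :
  simple_graph e -> connected_graph e -> S != set0 -> 1 <= l ->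
  (solid_resolving e l S <->
   forall (x : T) (Y : {set T}), Y != set0 -> x \notin Y -> #|Y| <= l ->
     exists2 s, s \in S & dist e s x < dist_set e s Y).
Proof.
move=> _ _ _ _; split.
- move=> H x Y Y0 xY hY.
  have hne : Y != x |: Y.
    apply/eqP => hE; move: xY; by rewrite hE setU11.
  have hXY : x |: Y != set0 by apply/set0Pn; exists x; rewrite setU11.
  have := H Y (x |: Y) Y0 hXY hne hY.
  case: (boolP [exists s in S, dist e s x < dist_set e s Y]) => [/exists_inP [s sS hs] _ | hno].
    by exists s.
  move/negP => []; apply/eqP; apply/eq_in_map => s; rewrite mem_enum => sS.
  rewrite ds_U1 //.
  have : ~~ (dist e s x < dist_set e s Y).
    by apply: contra hno => h; apply/exists_inP; exists s.
  by rewrite -leqNgt => /minn_idPr ->.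
- move=> H X Y X0 Y0 XY hX.
  case: (boolP (Y \subset X)) => sYX.
  + have [x xX xY] : exists2 x, x \in X & x \notin Y.
      apply/exists_inP; rewrite -negb_forall_in; apply/negP => /forall_inP h.
      move/negP: XY; apply; rewrite eqEsubset sYX andbT; apply/subsetP => z; exact: h.
    have hY : #|Y| <= l.
      apply: leq_trans hX; apply: subset_leq_card sYX.
    have [s sS hs] := H x Y Y0 xY hY.
    apply: (@arr_ne _ _ _ _ _ s sS); rewrite neq_ltn; apply/orP; left.
    exact: (leq_ltn_trans (@ds_le T e s X x xX) hs).
  + have [x xY xX] : exists2 x, x \in Y & x \notin X.
      apply/exists_inP; rewrite -negb_forall_in; apply/negP => /forall_inP h.
      move/negP: sYX; apply; apply/subsetP => z; exact: h.
    have [s sS hs] := H x X X0 xX hX.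
    apply: (@arr_ne _ _ _ _ _ s sS); rewrite neq_ltn; apply/orP; right.
    exact: (leq_ltn_trans (@ds_le T e s Y x xY) hs).
Qed.
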